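(* Let $(X,d,\ll,\le,\tau)$ be a locally causally closed and $d$-compatible Lorentzian pre-length space, and let $(\gamma_n)_n$ be a sequence of future-directed causal curves $\gamma_n:[0,L_n]\to X$ parametrized with respect to $d$-arclength, with $L_n:=L^d(\gamma_n)\to\infty$. Suppose that either there is a compact set containing every $\gamma_n([0,L_n])$, or $d$ is proper and $\gamma_n(0)\to x$ for some $x\in X$. Then there exist a subsequence $(\gamma_{n_k})_k$ and a future-directed causal curve $\gamma:[0,\infty)\to X$ such that $\gamma_{n_k}\to\gamma$ locally uniformly (i.e., for every $T>0$, $\gamma_{n_k}|_{[0,T]}\to\gamma|_{[0,T]}$ uniformly, this being defined for all $k$ large). Moreover, $\gamma$ is inextendible, i.e., $\lim_{t\to\infty}\gamma(t)$ does not exist in $X$.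
   Context: A causal space $(X,\ll,\le)$: $\le$ reflexive and transitive, $\ll$ transitive, $x\ll y\Rightarrow x\le y$. A Lorentzian pre-length space $(X,d,\ll,\le,\tau)$ is a causal space with a metric $d$ and $\tau:X\times X\to[0,\infty]$ lower semicontinuous w.r.t. $d$, with $\tau(x,z)\ge\tau(x,y)+\tau(y,z)$ for $x\le y\le z$, $\tau(x,y)=0$ if $x\not\le y$, $\tau(x,y)>0\iff x\ll y$. A future-directed causal curve is a non-constant $d$-locally Lipschitz $\gamma:I\to X$ with $\gamma(t_1)\le\gamma(t_2)$ for $t_1<t_2$; causal curves are future- or past-directed ones. $L^d$ is $d$-arclength; $d$ is proper if closed bounded sets are compact. Locally causally closed: every point has a neighborhood $U$ such that $p_n,q_n\in U$, $p_n\le q_n$, $p_n\to p\in\bar U$, $q_n\to q\in\bar U$ imply $p\le q$. $d$-compatible: every point has a neighborhood $U$ and $C>0$ with $L^d(\gamma)\le C$ for all causal curves $\gamma$ contained in $U$. A future-directed causal curve on $[a,b)$ is inextendible if it admits no extension to a future-directed causal curve including the endpoint; for curves on $[0,\infty)$ this is understood as non-existence of $\lim_{t\to\infty}\gamma(t)$. *)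

(* Defs.v *)
From Stdlib Require Import Reals List.
From Coquelicot Require Import Coquelicot.
Open Scope R_scope.

Section LPLS.
Context {X : Type}.

Definition is_metric (d : X -> X -> R) : Prop :=
  (forall x y, 0 <= d x y) /\ (forall x y, d x y = 0 <-> x = y) /\
  (forall x y, d x y = d y x) /\ (forall x y z, d x z <= d x y + d y z).

Definition causal_space (ll le : X -> X -> Prop) : Prop :=
  (forall x, le x x) /\ (forall x y z, le x y -> le y z -> le x z) /\
  (forall x y z, ll x y -> ll y z -> ll x z) /\ (forall x y, ll x y -> le x y).

Definition tau_lsc (d : X -> X -> R) (tau : X -> X -> Rbar) : Prop :=
  forall x y (r : R), Rbar_lt r (tau x y) ->
    exists delta, 0 < delta /\ forall x' y', d x x' < delta -> d y y' < delta ->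
      Rbar_lt r (tau x' y').

Definition is_LPLS (d : X -> X -> R) (ll le : X -> X -> Prop) (tau : X -> X -> Rbar) : Prop :=
  is_metric d /\ causal_space ll le /\ tau_lsc d tau /\
  (forall x y, Rbar_le (Finite 0) (tau x y)) /\
  (forall x y z, le x y -> le y z -> Rbar_le (Rbar_plus (tau x y) (tau y z)) (tau x z)) /\
  (forall x y, ~ le x y -> tau x y = Finite 0) /\
  (forall x y, Rbar_lt (Finite 0) (tau x y) <-> ll x y).

Definition is_interval (I : R -> Prop) : Prop :=
  forall a b c, I a -> I b -> a <= c <= b -> I c.

Definition loc_lipschitz (d : X -> X -> R) (I : R -> Prop) (g : R -> X) : Prop :=
  forall t, I t -> exists delta C, 0 < delta /\
    forall s u, I s -> I u -> Rabs (s - t) < delta -> Rabs (u - t) < delta ->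
      d (g s) (g u) <= C * Rabs (s - u).

Definition future_causal_curve (d : X -> X -> R) (le : X -> X -> Prop)
  (I : R -> Prop) (g : R -> X) : Prop :=
  is_interval I /\ loc_lipschitz d I g /\
  (exists s t, I s /\ I t /\ g s <> g t) /\
  (forall s t, I s -> I t -> s < t -> le (g s) (g t)).

Definition past_causal_curve (d : X -> X -> R) (le : X -> X -> Prop)
  (I : R -> Prop) (g : R -> X) : Prop :=
  is_interval I /\ loc_lipschitz d I g /\
  (exists s t, I s /\ I t /\ g s <> g t) /\
  (forall s t, I s -> I t -> s < t -> le (g t) (g s)).

Definition causal_curve d le I g : Prop :=
  future_causal_curve d le I g \/ past_causal_curve d le I g.

Fixpoint chain_in (I : R -> Prop) (t0 : R) (l : list R) : Prop :=
  match l with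
  | nil => True
  | t1 :: l' => t0 <= t1 /\ I t1 /\ chain_in I t1 l'
  end.

Fixpoint var_sum (d : X -> X -> R) (g : R -> X) (t0 : R) (l : list R) : R :=
  match l with
  | nil => 0
  | t1 :: l' => d (g t0) (g t1) + var_sum d g t1 l'
  end.

Definition curve_length (d : X -> X -> R) (I : R -> Prop) (g : R -> X) : Rbar :=
  Lub_Rbar (fun r => exists t0 l, I t0 /\ chain_in I t0 l /\ r = var_sum d g t0 l).

Definition nbhd (d : X -> X -> R) (x : X) (U : X -> Prop) : Prop :=
  exists r, 0 < r /\ forall y, d x y < r -> U y.

Definition seq_conv (d : X -> X -> R) (p : nat -> X) (x : X) : Prop :=
  forall eps, 0 < eps -> exists N, forall n, (N <= n)%nat -> d (p n) x < eps.

Definition closure (d : X -> X -> R) (U : X -> Prop) (p : X) : Prop :=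
  forall eps, 0 < eps -> exists u, U u /\ d p u < eps.

Definition is_open (d : X -> X -> R) (O : X -> Prop) : Prop :=
  forall x, O x -> nbhd d x O.

Definition is_closed (d : X -> X -> R) (C : X -> Prop) : Prop :=
  forall p, closure d C p -> C p.

Definition is_bounded (d : X -> X -> R) (C : X -> Prop) : Prop :=
  exists x0 r, forall y, C y -> d x0 y <= r.

Definition is_compact (d : X -> X -> R) (K : X -> Prop) : Prop :=
  forall (Idx : Type) (O : Idx -> X -> Prop),
    (forall i, is_open d (O i)) -> (forall x, K x -> exists i, O i x) ->
    exists l : list Idx, forall x, K x -> exists i, In i l /\ O i x.

Definition proper_metric (d : X -> X -> R) : Prop :=
  forall C, is_closed d C -> is_bounded d C -> is_compact d C.

Definition loc_causally_closed (d : X -> X -> R) (le : X -> X -> Prop) : Prop :=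
  forall x, exists U, nbhd d x U /\
    forall (pn qn : nat -> X) (p q : X),
      (forall n, U (pn n) /\ U (qn n) /\ le (pn n) (qn n)) ->
      seq_conv d pn p -> closure d U p ->
      seq_conv d qn q -> closure d U q -> le p q.

Definition d_compatible (d : X -> X -> R) (le : X -> X -> Prop) : Prop :=
  forall x, exists U C, nbhd d x U /\ 0 < C /\
    forall (I : R -> Prop) (g : R -> X), causal_curve d le I g ->
      (forall t, I t -> U (g t)) -> Rbar_le (curve_length d I g) (Finite C).

Definition arclength_param (d : X -> X -> R) (g : R -> X) (L : R) : Prop :=
  forall s t, 0 <= s -> s <= t -> t <= L ->
    curve_length d (fun u => s <= u <= t) g = Finite (t - s).

End LPLS.

(* Main.v *)
Require Import Defs.
From Stdlib Require Import Reals List Lra Lia ZArith Classical ClassicalEpsilon.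
From Coquelicot Require Import Coquelicot.
Open Scope R_scope.

Lemma m_refl {X} (d : X -> X -> R) : is_metric d -> forall x, d x x = 0.
Proof. intros (_&H&_) x. apply H; auto. Qed.
Lemma m_sym {X} (d : X -> X -> R) : is_metric d -> forall x y, d x y = d y x.
Proof. intros (_&_&H&_). auto. Qed.
Lemma m_tri {X} (d : X -> X -> R) : is_metric d -> forall x y z, d x z <= d x y + d y z.
Proof. intros (_&_&_&H). auto. Qed.
Lemma m_pos {X} (d : X -> X -> R) : is_metric d -> forall x y, 0 <= d x y.
Proof. intros (H&_). auto. Qed.

Definition incr (r : nat -> nat) := forall k, (r k < r (S k))%nat.

Lemma incr_mono r : incr r -> forall i j, (i <= j)%nat -> (r i <= r j)%nat.
Proof. intros H i j Hij. induction Hij. lia. specialize (H m). lia. Qed.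
Lemma incr_ge r : incr r -> forall k, (k <= r k)%nat.
Proof. intros H k. induction k. lia. specialize (H k). lia. Qed.
Lemma incr_comp r s : incr r -> incr s -> incr (fun k => r (s k)).
Proof. intros Hr Hs k. 
  assert (H := incr_mono r Hr (S (s k)) (s (S k)) (Hs k)). specialize (Hr (s k)). lia. Qed.

Definition cauchy {X} (d : X -> X -> R) (a : nat -> X) :=
  forall eps, 0 < eps -> exists N, forall i j, (N <= i)%nat -> (N <= j)%nat -> d (a i) (a j) < eps.

Lemma conv_cauchy {X} (d : X -> X -> R) a p : is_metric d -> seq_conv d a p -> cauchy d a.
Proof. intros Hd H eps He. destruct (H (eps/2)) as [N HN]; [lra|]. exists N. intros i j Hi Hj.
  specialize (HN i Hi) as A. specialize (HN j Hj) as B.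
  pose proof (m_tri d Hd (a i) p (a j)). rewrite (m_sym d Hd p) in H0. lra. Qed.

Lemma cauchy_sub {X} (d : X -> X -> R) a r : incr r -> cauchy d a -> cauchy d (fun k => a (r k)).
Proof. intros Hr H eps He. destruct (H eps He) as [N HN]. exists N. intros i j Hi Hj.
  apply HN; pose proof (incr_ge r Hr i); pose proof (incr_ge r Hr j); lia. Qed.

Lemma conv_sub {X} (d : X -> X -> R) a r p : incr r -> seq_conv d a p -> seq_conv d (fun k => a (r k)) p.
Proof. intros Hr H eps He. destruct (H eps He) as [N HN]. exists N. intros i Hi.
  apply HN; pose proof (incr_ge r Hr i); lia. Qed.

Lemma cauchy_sub_conv {X} (d : X -> X -> R) a r p : is_metric d -> incr r -> cauchy d a ->
  seq_conv d (fun k => a (r k)) p -> seq_conv d a p.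
Proof. intros Hd Hr Hc H eps He. destruct (Hc (eps/2)) as [N HN]; [lra|].
  destruct (H (eps/2)) as [M HM]; [lra|]. exists N. intros n Hn.
  pose (k := Nat.max N M). pose proof (incr_ge r Hr k).
  specialize (HN n (r k) Hn ltac:(lia)). specialize (HM k ltac:(lia)).
  pose proof (m_tri d Hd (a n) (a (r k)) p). lra. Qed.

Lemma list_max_nat {A} (f : A -> nat) (l : list A) : exists M, forall i, In i l -> (f i <= M)%nat.
Proof. induction l as [|x l [M HM]]. exists 0%nat. intros i []. 
  exists (Nat.max (f x) M). intros i [<-|Hi]. lia. specialize (HM i Hi). lia. Qed.

Lemma compact_cluster {X} (d : X -> X -> R) K a : is_metric d -> is_compact d K ->
  (forall k, K (a k)) -> exists p, forall eps, 0 < eps -> forall N, exists k, (N <= k)%nat /\ d (a k) p < eps.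
Proof. intros Hd HK Ha. apply NNPP. intro Hn.
  set (O := fun (i : X * R * nat) y => let '(p, e, N) := i in
     0 < e /\ (forall k, (N <= k)%nat -> e <= d (a k) p) /\ d p y < e/2).
  destruct (HK _ O) as [l Hl].
  - intros [[p e] N] y [He [HN Hy]]. exists (e/2 - d p y). split. lra.
    intros z Hz. split; [auto|split;[auto|]]. pose proof (m_tri d Hd p y z). lra.
  - intros x Kx. assert (~ forall eps, 0 < eps -> forall N, exists k, (N <= k)%nat /\ d (a k) x < eps)
      by (intro; apply Hn; exists x; auto).
    apply not_all_ex_not in H as [e He]. apply imply_to_and in He as [He He'].
    apply not_all_ex_not in He' as [N HN]. exists (x, e, N). split; auto. split.
    + intros k Hk. destruct (Rlt_or_le (d (a k) x) e) as [h|h]; auto. exfalso; apply HN; eauto.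
    + rewrite (m_refl d Hd). lra.
  - destruct (list_max_nat (fun i : X*R*nat => snd i) l) as [M HM].
    destruct (Hl (a M) (Ha M)) as [[[p e] N] [Hi [He [HN Hy]]]].
    specialize (HM _ Hi). simpl in HM. specialize (HN M HM). rewrite (m_sym d Hd) in HN. lra.
Qed.

Lemma cluster_subseq {X} (d : X -> X -> R) a p : 
  (forall eps, 0 < eps -> forall N, exists k, (N <= k)%nat /\ d (a k) p < eps) ->
  exists r, incr r /\ seq_conv d (fun k => a (r k)) p.
Proof. intros H.
  set (f := fun e N => epsilon (inhabits 0%nat) (fun k => (N <= k)%nat /\ d (a k) p < e)).
  assert (Hf : forall e N, 0 < e -> (N <= f e N)%nat /\ d (a (f e N)) p < e).
  { intros e N He. unfold f. apply epsilon_spec. apply H; auto. }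
  set (r := fix r n := match n with O => f 1 O | S m => f (/ INR (S (S m))) (S (r m)) end).
  assert (Hr : forall n, d (a (r n)) p < / INR (S n)).
  { intros [|n]. simpl. replace (/1) with 1 by field. apply Hf; lra.
    simpl r. apply Hf. apply Rinv_0_lt_compat. apply lt_0_INR, Nat.lt_0_succ. }
  exists r. split.
  - intro k. assert (E : r (S k) = f (/ INR (S (S k))) (S (r k))) by reflexivity. rewrite E. assert (0 < / INR (S (S k))) by (apply Rinv_0_lt_compat, lt_0_INR; lia).
    destruct (Hf (/ INR (S (S k))) (S (r k)) H0). lia.
  - intros eps He. destruct (archimed (/ eps)) as [H1 _].
    assert (0 <= IZR (up (/eps))) by (pose proof (Rinv_0_lt_compat _ He); lra).
    exists (Z.to_nat (up (/ eps))). intros n Hn. eapply Rlt_le_trans. apply Hr.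
    apply le_INR in Hn. rewrite INR_IZR_INZ, Z2Nat.id in Hn by (apply le_IZR; auto).
    rewrite <- (Rinv_inv eps). apply Rinv_le_contravar. apply Rinv_0_lt_compat; auto.
    rewrite S_INR. lra.
Qed.

Lemma compact_subseq {X} (d : X -> X -> R) K a : is_metric d -> is_compact d K ->
  (forall k, K (a k)) -> exists r p, incr r /\ seq_conv d (fun k => a (r k)) p.
Proof. intros Hd HK Ha. destruct (compact_cluster d K a Hd HK Ha) as [p Hp].
  destruct (cluster_subseq d a p Hp) as [r Hr]. eauto. Qed.
Lemma arc_lip {X} (d : X -> X -> R) g L : arclength_param d g L ->
  forall s t, 0 <= s -> s <= t -> t <= L -> d (g s) (g t) <= t - s.
Proof. intros H s t H1 H2 H3. specialize (H s t H1 H2 H3). unfold curve_length in H.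
  destruct (Lub_Rbar_correct (fun r => exists t0 l, (fun u => s <= u <= t) t0 /\
     chain_in (fun u => s <= u <= t) t0 l /\ r = var_sum d g t0 l)) as [Hub _].
  rewrite H in Hub. specialize (Hub (d (g s) (g t))). simpl in Hub.
  apply Hub. exists s, (t :: nil). simpl. split. lra. split. lra. ring.
Qed.

Lemma arc_lip_abs {X} (d : X -> X -> R) g L : is_metric d -> arclength_param d g L ->
  forall s t, 0 <= s <= L -> 0 <= t <= L -> d (g s) (g t) <= Rabs (s - t).
Proof. intros Hd H s t Hs Ht. destruct (Rle_or_lt s t).
  - rewrite Rabs_left1 by lra. pose proof (arc_lip d g L H s t); lra.
  - rewrite Rabs_right by lra. rewrite (m_sym d Hd). pose proof (arc_lip d g L H t s); lra.
Qed.

Lemma var_sum_const {X} (d : X -> X -> R) (I : R -> Prop) g x : is_metric d ->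
  (forall u, I u -> g u = x) -> forall l t0, I t0 -> chain_in I t0 l -> var_sum d g t0 l = 0.
Proof. intros Hd Hc l. induction l as [|t1 l IH]; intros t0 H0 Hch. reflexivity.
  simpl in *. destruct Hch as (_&H1&Hch). rewrite (IH t1 H1 Hch), (Hc t0 H0), (Hc t1 H1), (m_refl d Hd). ring.
Qed.

Lemma length_nonconst {X} (d : X -> X -> R) (I : R -> Prop) g c t0 : is_metric d ->
  curve_length d I g = Finite c -> 0 < c -> I t0 -> exists s t, I s /\ I t /\ g s <> g t.
Proof. intros Hd Hl Hc H0. apply NNPP. intro Hn.
  assert (Hk : forall u, I u -> g u = g t0).
  { intros u Hu. apply NNPP. intro Hne. apply Hn. exists u, t0. auto. }
  unfold curve_length in Hl.
  destruct (Lub_Rbar_correct (fun r => exists t0 l, I t0 /\ chain_in I t0 l /\ r = var_sum d g t0 l)) as [_ Hlub].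
  rewrite Hl in Hlub. specialize (Hlub (Finite 0)). simpl in Hlub.
  enough (c <= 0) by lra. apply Hlub. intros r (t1 & l & H1 & Hch & ->).
  rewrite (var_sum_const d I g (g t0) Hd Hk l t1 H1 Hch). simpl. lra.
Qed.

Lemma floor_nat x : 0 <= x -> exists i : nat, INR i <= x < INR i + 1.
Proof. intros Hx. destruct (archimed x) as [H1 H2].
  assert (Hz : (1 <= up x)%Z). { apply le_IZR. assert (IZR (up x) > 0) by lra.
    apply lt_IZR in H. simpl. apply IZR_le. lia. }
  exists (Z.to_nat (up x - 1)). rewrite INR_IZR_INZ, Z2Nat.id by lia.
  rewrite minus_IZR. simpl. lra.
Qed.

Lemma nat_above x : exists m : nat, x <= INR m.
Proof. destruct (floor_nat (Rmax x 0)) as [i Hi]. apply Rmax_r.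
  exists (S i). rewrite S_INR. pose proof (Rmax_l x 0). lra. Qed.

Lemma le_eps x y : (forall e, 0 < e -> x < y + e) -> x <= y.
Proof. intros H. apply Rnot_lt_le. intro Hl. specialize (H ((x - y)/2) ltac:(lra)). lra. Qed.

Lemma chain_sup (Q : R -> R -> Prop) (Qrefl : forall x, Q x x)
  (Qtrans : forall x y z, Q x y -> Q y z -> Q x z)
  (loc : forall u, 0 <= u -> exists delta, 0 < delta /\ forall a b, 0 <= a -> a < b ->
      Rabs (a - u) <= delta -> Rabs (b - u) <= delta -> Q a b) :
  forall s t, 0 <= s -> s < t -> Q s t.
Proof. intros s t Hs Hst.
  set (E := fun u => s <= u <= t /\ Q s u).
  destruct (completeness E) as [c [Hub Hlub]].
  { exists t. intros u [Hu _]. lra. }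
  { exists s. split. lra. auto. }
  assert (Hsc : s <= c) by (apply Hub; split; [lra|auto]).
  assert (Hct : c <= t) by (apply Hlub; intros u [Hu _]; lra).
  destruct (loc c ltac:(lra)) as [delta [Hdel Hloc]].
  assert (Hu : exists u, E u /\ c - delta < u).
  { apply NNPP. intro Hn. assert (c <= c - delta). apply Hlub. intros u Hu.
    apply Rnot_lt_le. intro Hl. apply Hn. eauto. lra. }
  destruct Hu as [u [[Hu1 Hu2] Hu3]]. assert (u <= c) by (apply Hub; split; auto).
  assert (Hb : forall b, u <= b -> b <= c + delta -> b <= t -> Q s b).
  { intros b H1 H2 H3. destruct (Req_dec u b) as [<-|Hne]. auto.
    apply Qtrans with u; auto. apply Hloc; try lra.
    apply Rabs_le; lra. apply Rabs_le; lra. }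
  destruct (Req_dec c t) as [<-|Hne].
  - apply Hb; lra.
  - exfalso. set (b := Rmin (c + delta/2) t).
    assert (c < b) by (unfold b; apply Rmin_glb_lt; lra).
    assert (b <= c). { apply Hub. split. split. lra. apply Rmin_r.
      apply Hb. lra. pose proof (Rmin_l (c + delta/2) t). fold b in H1. lra. apply Rmin_r. }
    lra.
Qed.

Lemma key_subseq {X} (d : X -> X -> R) (gam : nat -> R -> X) (L : nat -> R) :
  is_metric d -> (forall n, arclength_param d (gam n) (L n)) ->
  (forall M, exists N, forall n, (N <= n)%nat -> M <= L n) ->
  ((exists K, is_compact d K /\ forall n t, 0 <= t <= L n -> K (gam n t))
    \/ (proper_metric d /\ exists x, seq_conv d (fun n => gam n 0) x)) ->
  forall t psi, 0 <= t -> incr psi ->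
  exists rho p, incr rho /\ seq_conv d (fun k => gam (psi (rho k)) t) p.
Proof. intros Hd Harc Hinf Hbd t psi Ht Hpsi.
  assert (Hfin : forall N K, is_compact d K -> (forall k, K (gam (psi (k + N)%nat) t)) ->
     exists rho p, incr rho /\ seq_conv d (fun k => gam (psi (rho k)) t) p).
  { intros N K HK HKa. destruct (compact_subseq d K _ Hd HK HKa) as [r [p [Hr Hc]]].
    exists (fun k => (r k + N)%nat), p. split. intro k. specialize (Hr k). lia. exact Hc. }
  destruct Hbd as [[K [HK HKg]] | [Hprop [x Hx]]].
  - destruct (Hinf t) as [N HN]. apply (Hfin N K HK). intro k. apply HKg. split. auto.
    apply HN. pose proof (incr_ge psi Hpsi (k + N)). lia.
  - destruct (Hinf t) as [N1 HN1]. destruct (Hx 1 ltac:(lra)) as [N2 HN2].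
    set (K := fun y => d x y <= t + 1).
    assert (HK : is_compact d K).
    { apply Hprop.
      - intros p Hp. unfold K. apply le_eps. intros e He. destruct (Hp e He) as [u [Ku Hu]].
        pose proof (m_tri d Hd x u p). rewrite (m_sym d Hd u p) in H. unfold K in Ku. lra.
      - exists x, (t + 1). auto. }
    apply (Hfin (N1 + N2)%nat K HK). intro k. unfold K.
    set (n := psi (k + (N1 + N2))%nat). assert (Hn : (N1 + N2 <= n)%nat).
    { pose proof (incr_ge psi Hpsi (k + (N1 + N2))). unfold n. lia. }
    specialize (HN1 n ltac:(lia)). specialize (HN2 n ltac:(lia)).
    pose proof (arc_lip d (gam n) (L n) (Harc n) 0 t ltac:(lra) Ht HN1).
    pose proof (m_tri d Hd x (gam n 0) (gam n t)). rewrite (m_sym d Hd x (gam n 0)) in H0. lra.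
Qed.

Lemma refine_fin {X} (d : X -> X -> R) (gam : nat -> R -> X) (q : nat -> R) :
  is_metric d ->
  (forall t psi, 0 <= t -> incr psi ->
    exists rho p, incr rho /\ seq_conv d (fun k => gam (psi (rho k)) t) p) ->
  (forall i, 0 <= q i) ->
  forall c psi, incr psi -> exists rho, incr rho /\
    forall i, (i < c)%nat -> cauchy d (fun k => gam (psi (rho k)) (q i)).
Proof. intros Hd Key Hq c. induction c as [|c IH]; intros psi Hpsi.
  - exists (fun k => k). split. intro k; lia. intros i Hi; lia.
  - destruct (IH psi Hpsi) as [r1 [Hr1 Hc1]].
    destruct (Key (q c) (fun k => psi (r1 k)) (Hq c) (incr_comp _ _ Hpsi Hr1)) as [r2 [p [Hr2 Hp]]].
    exists (fun k => r1 (r2 k)). split. apply incr_comp; auto.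
    intros i Hi. destruct (Nat.eq_dec i c) as [->|Hne].
    + apply (conv_cauchy d _ p Hd Hp).
    + apply (cauchy_sub d (fun k => gam (psi (r1 k)) (q i)) r2 Hr2). apply Hc1. lia.
Qed.

Lemma fin_unif {X} (d : X -> X -> R) (a : nat -> nat -> X) eps : 0 < eps ->
  forall c, (forall i, (i < c)%nat -> cauchy d (a i)) ->
  exists N, forall i, (i < c)%nat -> forall j k, (N <= j)%nat -> (N <= k)%nat -> d (a i j) (a i k) < eps.
Proof. intros He c. induction c as [|c IH]; intros H.
  - exists O. intros; lia.
  - destruct IH as [N1 HN1]. intros i Hi; apply H; lia.
    destruct (H c ltac:(lia) eps He) as [N2 HN2]. exists (Nat.max N1 N2).
    intros i Hi j k Hj Hk. destruct (Nat.eq_dec i c) as [->|Hne].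
    apply HN2; lia. apply HN1; lia.
Qed.

Fixpoint diag_seq (rf : (nat -> nat) -> nat -> (nat -> nat)) (m : nat) : nat -> nat :=
  match m with
  | O => rf (fun k => k) O
  | S m' => fun k => diag_seq rf m' (rf (diag_seq rf m') (S m') k)
  end.

Lemma diagonal {X} (d : X -> X -> R) (gam : nat -> R -> X) (q : nat -> nat -> R) (c : nat -> nat) :
  (forall m psi, incr psi -> exists rho, incr rho /\
     forall i, (i < c m)%nat -> cauchy d (fun k => gam (psi (rho k)) (q m i))) ->
  exists phi, incr phi /\ forall m i, (i < c m)%nat -> cauchy d (fun k => gam (phi k) (q m i)).
Proof. intros Hr.
  set (P := fun psi m rho => incr psi -> incr rho /\
     forall i, (i < c m)%nat -> cauchy d (fun k => gam (psi (rho k)) (q m i))).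
  set (rf := fun psi m => epsilon (inhabits (fun k : nat => k)) (P psi m)).
  assert (Hrf : forall psi m, incr psi -> incr (rf psi m) /\
     forall i, (i < c m)%nat -> cauchy d (fun k => gam (psi (rf psi m k)) (q m i))).
  { intros psi m Hpsi. apply (epsilon_spec (inhabits (fun k : nat => k)) (P psi m)); auto.
    destruct (Hr m psi Hpsi) as [rho Hrho]. exists rho. intros _. auto. }
  assert (Hid : incr (fun k => k)) by (intro; lia).
  set (Sg := diag_seq rf).
  assert (Ha : forall m, incr (Sg m)).
  { induction m. apply (Hrf _ 0%nat Hid). intro k. 
    change (Sg (S m) k) with (Sg m (rf (Sg m) (S m) k)).
    change (Sg (S m) (S k)) with (Sg m (rf (Sg m) (S m) (S k))).
    apply (incr_comp (Sg m) (rf (Sg m) (S m))); auto. apply Hrf; auto. }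
  assert (Hb : forall m i, (i < c m)%nat -> cauchy d (fun k => gam (Sg m k) (q m i))).
  { intros [|m] i Hi. apply (Hrf _ 0%nat Hid); auto.
    apply (Hrf (Sg m) (S m) (Ha m)); auto. }
  assert (Hc : forall j m i, exists j', (i <= j')%nat /\ Sg (j + m)%nat i = Sg m j').
  { induction j as [|j IH]; intros m i. exists i. split; auto.
    change (Sg (S j + m)%nat i) with (Sg (j + m)%nat (rf (Sg (j + m)%nat) (S (j + m)) i)).
    destruct (IH m (rf (Sg (j + m)%nat) (S (j + m)) i)) as [j' [H1 H2]].
    exists j'. split; auto.
    pose proof (incr_ge _ (proj1 (Hrf (Sg (j + m)%nat) (S (j + m)) (Ha _))) i). lia. }
  exists (fun k => Sg k k). split.
  - intro k. change (Sg (S k) (S k)) with (Sg k (rf (Sg k) (S k) (S k))).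
    pose proof (incr_ge _ (proj1 (Hrf (Sg k) (S k) (Ha _))) (S k)).
    pose proof (incr_mono _ (Ha k) _ _ H). specialize (Ha k k). lia.
  - intros m i Hi eps He. destruct (Hb m i Hi eps He) as [N HN]. exists (N + m)%nat.
    assert (Hk : forall k, (m <= k)%nat -> exists j', (k <= j')%nat /\ Sg k k = Sg m j').
    { intros k Hk. destruct (Hc (k - m)%nat m k) as [j' [H1 H2]].
      replace (k - m + m)%nat with k in H2 by lia. eauto. }
    intros a b Ha' Hb'. destruct (Hk a ltac:(lia)) as [ja [Ha1 Ha2]].
    destruct (Hk b ltac:(lia)) as [jb [Hb1 Hb2]]. rewrite Ha2, Hb2. apply HN; lia.
Qed.

Theorem theorem3p14 (X : Type) (d : X -> X -> R) (ll le : X -> X -> Prop)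
  (tau : X -> X -> Rbar)
  (HX : is_LPLS d ll le tau)
  (Hlcc : loc_causally_closed d le)
  (Hcomp : d_compatible d le)
  (gam : nat -> R -> X) (L : nat -> R)
  (Hcurve : forall n, future_causal_curve d le (fun t => 0 <= t <= L n) (gam n))
  (Hlen : forall n, curve_length d (fun t => 0 <= t <= L n) (gam n) = Finite (L n))
  (Harc : forall n, arclength_param d (gam n) (L n))
  (Hinf : forall M, exists N, forall n, (N <= n)%nat -> M <= L n)
  (Hbd : (exists K, is_compact d K /\
            forall n t, 0 <= t <= L n -> K (gam n t))
         \/ (proper_metric d /\ exists x, seq_conv d (fun n => gam n 0) x)) :
  exists (phi : nat -> nat) (g : R -> X),
    (forall k, (phi k < phi (S k))%nat) /\
    future_causal_curve d le (fun t => 0 <= t) g /\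
    (forall T, 0 < T -> forall eps, 0 < eps -> exists N, forall k, (N <= k)%nat ->
       T <= L (phi k) /\
       forall t, 0 <= t <= T -> d (gam (phi k) t) (g t) < eps) /\
    ~ (exists p, forall eps, 0 < eps -> exists M, forall t, M <= t -> d (g t) p < eps).
Proof.
  destruct HX as (Hd & Hcs & _).
  destruct Hcs as (Hrefl & Htrans & _ & _).
  assert (Hlip : forall n s t, 0 <= s <= L n -> 0 <= t <= L n -> d (gam n s) (gam n t) <= Rabs (s - t))
    by (intros; apply (arc_lip_abs d (gam n) (L n) Hd (Harc n)); auto).
  pose proof (key_subseq d gam L Hd Harc Hinf Hbd) as Key.
  set (q := fun m i => INR i / INR (S m)).
  set (c := fun m => S (S m * S m)).
  assert (Hq : forall m i, 0 <= q m i).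
  { intros m i. unfold q. apply Rle_mult_inv_pos. apply pos_INR. apply lt_0_INR; lia. }
  destruct (diagonal d gam q c) as [phi [Hphi Hpc]].
  { intros m psi Hpsi. apply (refine_fin d gam (q m) Hd Key (Hq m) (c m) psi Hpsi). }
  assert (Hunif : forall T eps, 0 < eps -> exists N, forall a b, (N <= a)%nat -> (N <= b)%nat ->
     forall t, 0 <= t <= T -> d (gam (phi a) t) (gam (phi b) t) < eps).
  { intros T eps He. destruct (nat_above (Rmax T (3 / eps))) as [m Hm].
    pose proof (Rmax_l T (3/eps)). pose proof (Rmax_r T (3/eps)).
    set (h := INR (S m)). assert (Hh : h = INR m + 1) by (unfold h; apply S_INR).
    assert (H3 : eps / 3 * h > 1).
    { assert (3 / eps * eps = 3) by (field; lra).
      assert (h * eps > 3 / eps * eps) by (apply Rmult_lt_compat_r; lra). lra. }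
    destruct (fin_unif d (fun i k => gam (phi k) (q m i)) (eps/3) ltac:(lra) (c m) (Hpc m))
      as [N1 HN1].
    destruct (Hinf T) as [N2 HN2]. exists (Nat.max N1 N2). intros a b Ha Hb t Ht.
    assert (HLa : T <= L (phi a)) by (apply HN2; pose proof (incr_ge phi Hphi a); lia).
    assert (HLb : T <= L (phi b)) by (apply HN2; pose proof (incr_ge phi Hphi b); lia).
    destruct (floor_nat (t * h)) as [i Hi]. { apply Rmult_le_pos. lra. rewrite Hh. pose proof (pos_INR m). lra. }
    assert (Hqi : q m i * h = INR i) by (unfold q; fold h; field; rewrite Hh; pose proof (pos_INR m); lra).
    assert (Hh0 : 0 < h) by (rewrite Hh; pose proof (pos_INR m); lra).
    assert (Hle : q m i <= t).
    { apply Rmult_le_reg_r with h; auto. lra. }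
    assert (Hlt : t - q m i < eps / 3) by nra.
    assert (Hic : (i < c m)%nat).
    { unfold c. assert (INR i <= INR (S m * S m)).
      { rewrite mult_INR. fold h. assert (t * h <= h * h) by (apply Rmult_le_compat_r; lra). lra. }
      apply INR_le in H1. lia. }
    specialize (HN1 i Hic a b ltac:(lia) ltac:(lia)). simpl in HN1.
    pose proof (Hq m i).
    pose proof (Hlip (phi a) t (q m i) ltac:(lra) ltac:(lra)).
    pose proof (Hlip (phi b) (q m i) t ltac:(lra) ltac:(lra)).
    rewrite Rabs_right in H2 by lra. rewrite Rabs_left1 in H4 by lra.
    pose proof (m_tri d Hd (gam (phi a) t) (gam (phi a) (q m i)) (gam (phi b) t)).
    pose proof (m_tri d Hd (gam (phi a) (q m i)) (gam (phi b) (q m i)) (gam (phi b) t)).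
    lra. }
  set (g := fun t => epsilon (inhabits (gam O 0)) (fun p => seq_conv d (fun k => gam (phi k) t) p)).
  assert (Hg : forall t, 0 <= t -> seq_conv d (fun k => gam (phi k) t) (g t)).
  { intros t Ht. unfold g. apply epsilon_spec.
    assert (Hc : cauchy d (fun k => gam (phi k) t)).
    { intros eps He. destruct (Hunif t eps He) as [N HN]. exists N. intros i j Hi Hj.
      apply HN; auto; lra. }
    destruct (Key t phi Ht Hphi) as [r [p [Hr Hp]]]. exists p.
    apply (cauchy_sub_conv d _ r p Hd Hr Hc Hp). }

  assert (Hconv : forall T, 0 < T -> forall eps, 0 < eps -> exists N, forall k, (N <= k)%nat ->
       T <= L (phi k) /\ forall t, 0 <= t <= T -> d (gam (phi k) t) (g t) < eps).
  { intros T HT eps He. destruct (Hunif T (eps/2) ltac:(lra)) as [N1 HN1].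
    destruct (Hinf T) as [N2 HN2]. exists (Nat.max N1 N2). intros k Hk. split.
    apply HN2; pose proof (incr_ge phi Hphi k); lia.
    intros t Ht. destruct (Hg t ltac:(lra) (eps/2) ltac:(lra)) as [N3 HN3].
    specialize (HN3 (Nat.max N1 N3) ltac:(lia)).
    specialize (HN1 k (Nat.max N1 N3) ltac:(lia) ltac:(lia) t Ht).
    pose proof (m_tri d Hd (gam (phi k) t) (gam (phi (Nat.max N1 N3)) t) (g t)). lra. }
  assert (Hglip : forall s t, 0 <= s -> 0 <= t -> d (g s) (g t) <= Rabs (s - t)).
  { intros s t Hs Ht. apply le_eps. intros e He.
    destruct (Hg s Hs (e/2) ltac:(lra)) as [N1 HN1].
    destruct (Hg t Ht (e/2) ltac:(lra)) as [N2 HN2].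
    destruct (Hinf (Rmax s t)) as [N3 HN3].
    set (k := Nat.max N1 (Nat.max N2 N3)).
    specialize (HN1 k ltac:(lia)). specialize (HN2 k ltac:(lia)).
    assert (HL : Rmax s t <= L (phi k)) by (apply HN3; pose proof (incr_ge phi Hphi k); lia).
    pose proof (Rmax_l s t). pose proof (Rmax_r s t).
    pose proof (Hlip (phi k) s t ltac:(lra) ltac:(lra)).
    pose proof (m_tri d Hd (g s) (gam (phi k) s) (g t)).
    pose proof (m_tri d Hd (gam (phi k) s) (gam (phi k) t) (g t)).
    rewrite (m_sym d Hd (g s) (gam (phi k) s)) in *. lra. }
  assert (Hloc : forall u, 0 <= u -> exists delta, 0 < delta /\ forall a b, 0 <= a -> a < b ->
      Rabs (a - u) <= delta -> Rabs (b - u) <= delta -> le (g a) (g b)).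
  { intros u Hu. destruct (Hlcc (g u)) as [U [[r [Hr HU]] HUc]].
    exists (r/3). split. lra. intros a b Ha Hab Hau Hbu.
    assert (Hga : d (g u) (g a) <= r/3).
    { pose proof (Hglip u a Hu Ha). rewrite Rabs_minus_sym in Hau. lra. }
    assert (Hgb : d (g u) (g b) <= r/3).
    { pose proof (Hglip u b Hu ltac:(lra)). rewrite Rabs_minus_sym in Hbu. lra. }
    destruct (Hg a Ha (r/3) ltac:(lra)) as [N1 HN1].
    destruct (Hg b ltac:(lra) (r/3) ltac:(lra)) as [N2 HN2].
    destruct (Hinf b) as [N3 HN3].
    set (N := Nat.max N1 (Nat.max N2 N3)).
    apply (HUc (fun k => gam (phi (k + N)%nat) a) (fun k => gam (phi (k + N)%nat) b)).
    - intro k. specialize (HN1 (k + N)%nat ltac:(lia)). specialize (HN2 (k + N)%nat ltac:(lia)).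
      assert (HL : b <= L (phi (k + N)%nat)) by (apply HN3; pose proof (incr_ge phi Hphi (k + N)); lia).
      split; [|split].
      + apply HU. pose proof (m_tri d Hd (g u) (g a) (gam (phi (k + N)%nat) a)).
        rewrite (m_sym d Hd (g a)) in H. lra.
      + apply HU. pose proof (m_tri d Hd (g u) (g b) (gam (phi (k + N)%nat) b)).
        rewrite (m_sym d Hd (g b)) in H. lra.
      + destruct (Hcurve (phi (k + N)%nat)) as (_ & _ & _ & Hc). apply Hc; lra.
    - apply (conv_sub d (fun k => gam (phi k) a) (fun k => (k + N)%nat)). intro; lia. auto.
    - intros e He. exists (g a). split. apply HU. lra. rewrite (m_refl d Hd). auto.
    - apply (conv_sub d (fun k => gam (phi k) b) (fun k => (k + N)%nat)). intro; lia. apply Hg; lra.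
    - intros e He. exists (g b). split. apply HU. lra. rewrite (m_refl d Hd). auto. }
  assert (Hcaus : forall s t, 0 <= s -> s < t -> le (g s) (g t)).
  { apply (chain_sup (fun a b => le (g a) (g b))); auto. intros x y z. apply Htrans. }
  assert (Hinext : ~ (exists p, forall eps, 0 < eps -> exists M, forall t, M <= t -> d (g t) p < eps)).
  { intros [p Hp]. destruct (Hcomp p) as [U [C [[r [Hr HU]] [HC HCb]]]].
    destruct (Hp (r/2) ltac:(lra)) as [M HM].
    set (M' := Rmax M 0). pose proof (Rmax_l M 0). pose proof (Rmax_r M 0). fold M' in H, H0.
    set (T := M' + C + 1).
    destruct (Hconv T ltac:(unfold T; lra) (r/2) ltac:(lra)) as [N HN].
    destruct (HN N (Nat.le_refl N)) as [HLT Hclose].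
    set (I := fun u => M' <= u <= T).
    assert (Hcl : curve_length d I (gam (phi N)) = Finite (T - M')).
    { apply (Harc (phi N)); [lra | unfold T; lra | exact HLT]. }
    specialize (HCb I (gam (phi N))).
    rewrite Hcl in HCb. simpl in HCb. enough (T - M' <= C) by (unfold T in H1; lra).
    apply HCb.
    - left. split; [|split; [|split]].
      + intros x y z Hx Hy Hz. unfold I in *. lra.
      + intros t Ht. exists 1, 1. split. lra. intros s v Hs Hv _ _. rewrite Rmult_1_l.
        unfold I in *. apply Hlip; lra.
      + apply (length_nonconst d I (gam (phi N)) (T - M') M' Hd Hcl). unfold T; lra. unfold I, T; lra.
      + intros s t Hs Ht Hst. destruct (Hcurve (phi N)) as (_ & _ & _ & Hc). unfold I in *. apply Hc; lra.
    - intros t Ht. unfold I in Ht. apply HU. specialize (Hclose t ltac:(lra)).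
      specialize (HM t ltac:(lra)). pose proof (m_tri d Hd p (g t) (gam (phi N) t)).
      rewrite (m_sym d Hd p (g t)), (m_sym d Hd (g t) (gam (phi N) t)) in H1. lra. }
  exists phi, g. split; [exact Hphi|]. split; [|split; [exact Hconv|exact Hinext]].
  split; [|split; [|split]].
  - intros x y z Hx Hy Hz. lra.
  - intros t Ht. exists 1, 1. split. lra. intros s v Hs Hv _ _. rewrite Rmult_1_l. apply Hglip; auto.
  - apply NNPP. intro Hn. apply Hinext. exists (g 0). intros eps He. exists 0. intros t Ht.
    assert (g t = g 0). { apply NNPP. intro Hne. apply Hn. exists t, 0. split. lra. split. lra. auto. }
    rewrite H, (m_refl d Hd). auto.
  - intros s t Hs Ht Hst. apply Hcaus; auto.
Qed.
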